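(* For every integer $n\ge 1$ and every integer $i$ with $0\le i\le n$, there exists a cyclic two-fold triple system CTS$(6n+1,2)$ with fine structure $(c_1,c_2)=(2n-2i,\,i)$.
   Context: A cyclic $\lambda$-fold triple system CTS$(v,\lambda)$ is a multiset $\mathcal B$ of 3-element subsets (blocks) of $\mathbb Z_v$ such that every 2-element subset of $\mathbb Z_v$ is contained in exactly $\lambda$ blocks (counted with multiplicity), and $\mathcal B$ is invariant under the translation $x\mapsto x+1$ (a block and its translate have the same multiplicity). Thus $\mathcal B$ is a union of translation orbits of 3-subsets, each taken with some multiplicity; a base block is a representative of such an orbit. The fine structure of a CTS$(v,\lambda)$ is the vector $(c_1,\ldots,c_\lambda)$, where $c_i$ is the number of distinct base blocks (orbits) occurring with multiplicity exactly $i$. *)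

(* Defs.v *)
(* Z_v is modelled as 'I_v with translation x |-> x+1 mod v (ordS). *)
From mathcomp Require Import all_boot.
Set Implicit Arguments. Unset Strict Implicit. Unset Printing Implicit Defensive.

Definition trs (v : nat) (B : {set 'I_v}) : {set 'I_v} := [set ordS x | x in B].

Definition orb (v : nat) (B : {set 'I_v}) : {set {set 'I_v}} :=
  [set iter k (@trs v) B | k : 'I_v].

(* A multiset of blocks is given by its multiplicity function m.
   is_CTS v lam m : m is a cyclic lam-fold triple system CTS(v,lam). *)
Definition is_CTS (v lam : nat) (m : {set 'I_v} -> nat) : Prop :=
  [/\ (forall B, 0 < m B -> #|B| = 3),
      (forall P : {set 'I_v}, #|P| = 2 -> \sum_(B : {set 'I_v} | P \subset B) m B = lam)
    & (forall B, m (trs B) = m B)].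

Definition fine (v : nat) (m : {set 'I_v} -> nat) (i : nat) : nat :=
  #|[set orb B | B : {set 'I_v} & m B == i]|.

(* Main.v *)
Require Import Defs.
From mathcomp Require Import all_boot all_algebra.
From mathcomp Require Import zify.
Set Implicit Arguments. Unset Strict Implicit. Unset Printing Implicit Defensive.
Import GRing.Theory.

Definition SK n (a : nat -> nat) := forall j k, 1 <= j <= n -> 1 <= k <= n ->
  [/\ 1 <= a j, a j + j <= 2*n+1, ((a j = a k -> j = k) /\ (a j + j = a k + k -> j = k)), a j <> a k + k &
   [/\ a j + a k <> 4*n+1, a j + (a k + k) <> 4*n+1 & (a j + j) + (a k + k) <> 4*n+1]].

Definition a0 s j :=
  if j %% 2 == 0 then 6*s - j %/ 2
  else if j == 1 then s else if j == 2*s-1 then 2*s else if j == 4*s-1 then 2*s+1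
  else if j <= 2*s-3 then 2*s - j %/ 2 else 2*s - 1 - j %/ 2.

Definition a1 s j :=
  if j %% 2 == 0 then 6*s + 2 - j %/ 2
  else if j == 1 then s + 1 else if j == 4*s+1 then 2*s+1 else if j == 2*s-1 then 2*s+2
  else if j <= 2*s-3 then 2*s + 1 - j %/ 2 else 2*s - j %/ 2.

Definition a2 s j :=
  if j %% 2 == 1 then (if j == 1 then 3*s+1 else if j == 3 then 6*s+1 else 6*s+2 - j %/ 2)
  else if j == 4*s+2 then 2*s else if j == 2*s+2 then 6*s+3
  else if j <= 2*s then 2*s - j %/ 2 else 2*s + 1 - j %/ 2.

Definition a3 s j :=
  if j %% 2 == 0 then (if j == 2 then 8*s+5 else 6*s+2 - j %/ 2)
  else if j == 1 then 3*s else if j == 2*s+1 then 6*s+3 else if j == 4*s+1 then 2*s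
  else if j == 4*s+3 then 2*s-1 else if j <= 2*s-1 then 2*s - 1 - j %/ 2 else 2*s - j %/ 2.

Lemma sk0 s : 1 <= s -> SK (4*s) (a0 s).
Proof. move=> hs; rewrite /a0; move=> j k hj hk;
  move: (divn_eq j 2) (ltn_pmod j (isT : 0 < 2)) (divn_eq k 2) (ltn_pmod k (isT : 0 < 2));
  move: (j %/ 2) (j %% 2) (k %/ 2) (k %% 2) => u r u' r' Hj Hr Hk Hr';
  case: ifP => h1; case: ifP => h2; try case: ifP => h3; try case: ifP => h4; try case: ifP => h5;
  try case: ifP => h6; try case: ifP => h7; try case: ifP => h8; try case: ifP => h9; try case: ifP => h10;
  try case: ifP => h11; try case: ifP => h12;
  split; try split; try split; lia. Qed.
Lemma sk1 s : 2 <= s -> SK (4*s+1) (a1 s).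
Proof. move=> hs; rewrite /a1; move=> j k hj hk;
  move: (divn_eq j 2) (ltn_pmod j (isT : 0 < 2)) (divn_eq k 2) (ltn_pmod k (isT : 0 < 2));
  move: (j %/ 2) (j %% 2) (k %/ 2) (k %% 2) => u r u' r' Hj Hr Hk Hr';
  case: ifP => h1; case: ifP => h2; try case: ifP => h3; try case: ifP => h4; try case: ifP => h5;
  try case: ifP => h6; try case: ifP => h7; try case: ifP => h8; try case: ifP => h9; try case: ifP => h10;
  try case: ifP => h11; try case: ifP => h12;
  split; try split; try split; lia. Qed.
Lemma sk2 s : 1 <= s -> SK (4*s+2) (a2 s).
Proof. move=> hs; rewrite /a2; move=> j k hj hk;
  move: (divn_eq j 2) (ltn_pmod j (isT : 0 < 2)) (divn_eq k 2) (ltn_pmod k (isT : 0 < 2));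
  move: (j %/ 2) (j %% 2) (k %/ 2) (k %% 2) => u r u' r' Hj Hr Hk Hr';
  case: ifP => h1; case: ifP => h2; try case: ifP => h3; try case: ifP => h4; try case: ifP => h5;
  try case: ifP => h6; try case: ifP => h7; try case: ifP => h8; try case: ifP => h9; try case: ifP => h10;
  try case: ifP => h11; try case: ifP => h12;
  split; try split; try split; lia. Qed.
Lemma sk3 s : 1 <= s -> SK (4*s+3) (a3 s).
Proof. move=> hs; rewrite /a3; move=> j k hj hk;
  move: (divn_eq j 2) (ltn_pmod j (isT : 0 < 2)) (divn_eq k 2) (ltn_pmod k (isT : 0 < 2));
  move: (j %/ 2) (j %% 2) (k %/ 2) (k %% 2) => u r u' r' Hj Hr Hk Hr';
  case: ifP => h1; case: ifP => h2; try case: ifP => h3; try case: ifP => h4; try case: ifP => h5;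
  try case: ifP => h6; try case: ifP => h7; try case: ifP => h8; try case: ifP => h9; try case: ifP => h10;
  try case: ifP => h11; try case: ifP => h12;
  split; try split; try split; lia. Qed.

Definition as1 j := nth 0 [:: 0; 1] j.
Definition as2 j := nth 0 [:: 0; 1; 3] j.
Definition as3 j := nth 0 [:: 0; 2; 5; 1] j.
Definition as5 j := nth 0 [:: 0; 1; 4; 7; 5; 3] j.

Lemma sks1 : SK 1 as1.
Proof.
move=> j k hj hk; case: j hj => [|[|j]] hj; try lia; case: k hk => [|[|k]] hk; try lia.
rewrite /as1 /=; split; try split; try split; lia.
Qed.
Lemma sks2 : SK 2 as2.
Proof.
move=> j k hj hk; case: j hj => [|[|[|j]]] hj; try lia; case: k hk => [|[|[|k]]] hk; try lia;
rewrite /as2 /=; split; try split; try split; lia.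
Qed.
Lemma sks3 : SK 3 as3.
Proof.
move=> j k hj hk; case: j hj => [|[|[|[|j]]]] hj; try lia; case: k hk => [|[|[|[|k]]]] hk; try lia;
rewrite /as3 /=; split; try split; try split; lia.
Qed.
Lemma sks5 : SK 5 as5.
Proof.
move=> j k hj hk; case: j hj => [|[|[|[|[|[|j]]]]]] hj; try lia; case: k hk => [|[|[|[|[|[|k]]]]]] hk; try lia;
rewrite /as5 /=; split; try split; try split; lia.
Qed.

Lemma skolem n : 0 < n -> exists a, SK n a.
Proof.
move=> hn.
have [s [r [e hr]]] : exists s r, n = 4 * s + r /\ r < 4.
  exists (n %/ 4), (n %% 4); split; last exact: ltn_pmod.
  by rewrite {1}(divn_eq n 4) mulnC.
subst n.
case: r hr hn => [|[|[|[|//]]]] _ hn.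
- by exists (a0 s); rewrite addn0; apply: sk0; lia.
- case: s hn => [|[|s]] hn; first by exists as1; exact: sks1.
    by exists as5; exact: sks5.
  by exists (a1 s.+2); apply: sk1; lia.
- case: s hn => [|s] hn; first by exists as2; exact: sks2.
  by exists (a2 s.+1); apply: sk2; lia.
- case: s hn => [|s] hn; first by exists as3; exact: sks3.
  by exists (a3 s.+1); apply: sk3; lia.
Qed.

Section Gen.
Variable p' : nat.
Local Notation v := p'.+1.
Local Notation T := 'I_v.
Local Open Scope ring_scope.

Definition tr (b : {set T}) (t : T) : {set T} := [set x + t | x in b].

Lemma mem_tr b t x : (x \in tr b t) = (x - t \in b).
Proof.
apply/imsetP/idP => [[y yb ->]|h]; first by rewrite addrK.
by exists (x - t) => //; rewrite subrK.
Qed.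

Lemma tr0 b : tr b 0 = b.
Proof. by apply/setP => x; rewrite mem_tr subr0. Qed.

Lemma trD b s t : tr (tr b s) t = tr b (s + t).
Proof. by apply/setP => x; rewrite !mem_tr opprD addrA [in RHS]addrAC. Qed.

Lemma card_tr b t : #|tr b t| = #|b|.
Proof. by rewrite card_imset //; apply: addIr. Qed.

Lemma tr_eq B b t : (tr B t == b) = (B == tr b (- t)).
Proof.
apply/eqP/eqP => [<-|->]; first by rewrite trD subrr tr0.
by rewrite trD addNr tr0.
Qed.

Definition chi (al be : T) (b : {set T}) : nat :=
  \big[addn/0%N]_(z : T) nat_of_bool ((z \in b) && (z + al \in b) && (z + be \in b)).

Lemma chi_tr al be b t : chi al be (tr b t) = chi al be b.
Proof.
rewrite /chi (reindex_inj (addIr t)) /=; apply: eq_bigr => z _.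
by rewrite !mem_tr addrK !(addrAC z t) !addrK.
Qed.

Lemma stab (b : {set T}) (t : T) : coprime 3 v -> #|b| = 3%N -> tr b t = b -> t = 0.
Proof.
move=> co hb e.
have : \sum_(x in tr b t) x = \sum_(x in b) x by rewrite e.
rewrite big_imset /=; last by move=> x y _ _; apply: addIr.
rewrite big_split /= sumr_const hb -{2}(addr0 (\sum_(x in b) x)) => /addrI.
rewrite Zp_mulrn => /(f_equal (@nat_of_ord _)) /= /eqP.
rewrite -/(dvdn v (t * 3)) Gauss_dvdl; last by rewrite coprime_sym.
move=> h; apply: val_inj => /=; apply/eqP; move: h; apply: contraLR => h.
by rewrite -lt0n in h; rewrite gtnNdvd.
Qed.


Lemma ordS_add (x : T) : (1 < v)%N -> ordS x = x + inZp 1.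
Proof. by move=> h; apply: val_inj => /=; rewrite (modn_small h) addn1. Qed.

Lemma trsE (B : {set T}) : (1 < v)%N -> trs B = tr B (inZp 1).
Proof. by move=> h; apply: eq_imset => x; rewrite ordS_add. Qed.

Section M.
Variables (I : finType) (bl : I -> {set T}) (mu : I -> nat).

Definition Mf (B : {set T}) : nat :=
  \big[addn/0%N]_(x : I) (mu x * \big[addn/0%N]_(t : T) nat_of_bool (B == tr (bl x) t))%N.

Lemma Mf_trs B : (1 < v)%N -> Mf (trs B) = Mf B.
Proof.
move=> h; rewrite /Mf trsE //; apply: eq_bigr => i _; congr (_ * _)%N.
rewrite (reindex_inj (addIr (inZp 1))) /=; apply: eq_bigr => t _.
by rewrite tr_eq trD addrK.
Qed.

Lemma sum_sub (P C : {set T}) :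
  \big[addn/0%N]_(B : {set T} | P \subset B) nat_of_bool (B == C) = nat_of_bool (P \subset C).
Proof.
rewrite big_mkcond (bigD1 C) //= eqxx big1 ?addn0 => [|B hB]; first by case: (P \subset C).
by rewrite (negbTE hB) if_same.
Qed.

Lemma pair_sum (x y : T) :
  \big[addn/0%N]_(B : {set T} | [set x; y] \subset B) Mf B =
  \big[addn/0%N]_(i : I) (mu i * chi (y - x)%R (y - x)%R (bl i))%N.
Proof.
rewrite /Mf exchange_big /=; apply: eq_bigr => i _.
rewrite -big_distrr /=; congr (_ * _)%N.
rewrite exchange_big /=.
rewrite (eq_bigr (fun t => nat_of_bool ([set x; y] \subset tr (bl i) t))); last first.
  by move=> t _; rewrite sum_sub.
rewrite /chi (reindex_inj (h := fun z => x - z)); last first.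
  by move=> a c /addrI /oppr_inj.
apply: eq_bigr => t _.
have E : y - (x - t) = t + (y - x) by rewrite opprB addrCA.
by rewrite subUset !sub1set !mem_tr E -andbA andbb subKr.
Qed.

Hypothesis v1 : (1 < v)%N.
Hypothesis co : coprime 3 v.
Hypothesis H1 : forall i, #|bl i| = 3%N.
Hypothesis H3 : forall i j t, tr (bl i) t = bl j -> i = j.

Lemma Mf_tr i t : Mf (tr (bl i) t) = mu i.
Proof.
rewrite /Mf (bigD1 i) //= [X in (_ + X)%N]big1 => [|j hj]; last first.
  rewrite big1 ?muln0 // => s _.
  case: eqP => // e; exfalso; move/eqP: hj; apply.
  have : tr (tr (bl i) t) (- s) = tr (tr (bl j) s) (- s) by rewrite e.
  by rewrite !trD subrr tr0 => /H3 ->.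
rewrite addn0 (bigD1 t) //= eqxx [X in (_ + X)%N]big1 ?addn0 ?muln1 // => s hs.
case: eqP => // e; exfalso; move/eqP: hs; apply.
have : tr (tr (bl i) t) (- s) = tr (tr (bl i) s) (- s) by rewrite e.
rewrite !trD subrr tr0 => /stab => /(_ co (H1 i)) /eqP.
by rewrite subr_eq0 => /eqP ->.
Qed.

Lemma Mf_cases B : (exists i t, B = tr (bl i) t) \/ Mf B = 0%N.
Proof.
case: (pickP (fun p : I * T => B == tr (bl p.1) p.2)) => [[i t] /eqP -> | h].
  by left; exists i, t.
right; rewrite /Mf big1 // => i _; rewrite big1 ?muln0 // => t _.
by have := h (i, t) => /= ->.
Qed.

Lemma iter_trs k B : iter k (@trs v) B = tr B (inZp 1 *+ k).
Proof.
elim: k => [|k IH]; first by rewrite mulr0n tr0.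
by rewrite iterS IH trsE // trD mulrSr.
Qed.

Lemma orbE B : orb B = [set tr B k | k : T].
Proof.
rewrite /orb; apply: eq_imset => k; rewrite iter_trs Zp_mulrn; congr tr.
by apply: val_inj => /=; rewrite (modn_small v1) mul1n modn_small.
Qed.

Lemma orb_tr B t : orb (tr B t) = orb B.
Proof.
rewrite !orbE; apply/setP => C; apply/imsetP/imsetP => [[k _ ->]|[k _ ->]].
  by exists (t + k) => //; rewrite trD.
by exists (k - t) => //; rewrite trD addrC subrK.
Qed.

Lemma fine_eq c : (0 < c)%N -> fine Mf c = #|[set i | mu i == c]|.
Proof.
move=> c0; rewrite /fine.
have -> : [set orb B | B : {set T} & Mf B == c] = [set orb (bl i) | i in [set i | mu i == c]].
  apply/setP => O; apply/imsetP/imsetP => [[B]|[i]].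
    rewrite inE => hB ->; case: (Mf_cases B) => [[i [t eB]]|h].
      by exists i; [rewrite inE -(Mf_tr i t) -eB | rewrite eB orb_tr].
    by move: hB; rewrite h eq_sym; case: c c0.
  rewrite inE => hi ->; exists (bl i) => //.
  by rewrite inE -{1}(tr0 (bl i)) Mf_tr.
rewrite card_in_imset // => i j _ _ e.
have : bl j \in orb (bl i) by rewrite e orbE; apply/imsetP; exists 0 => //; rewrite tr0.
by rewrite orbE => /imsetP [k _ /esym /H3].
Qed.

Lemma gen_CTS lam :
  (forall d : T, d != 0 -> \big[addn/0%N]_(i : I) (mu i * chi d d (bl i))%N = lam) ->
  is_CTS lam Mf.
Proof.
move=> H2; split.
- move=> B; case: (Mf_cases B) => [[i [t ->]] _|-> //]; by rewrite card_tr.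
- move=> P /eqP /cards2P [x [y [hxy ->]]]; rewrite pair_sum H2 //.
  by rewrite subr_eq0 eq_sym.
- by move=> B; rewrite Mf_trs.
Qed.

End M.
End Gen.

Section Z.
Variable p' : nat.
Local Notation v := p'.+1.
Local Notation T := 'I_v.

Lemma inZp_eq (x y : nat) : (x < v)%N -> (y < v)%N -> (inZp x == inZp y :> T) = (x == y).
Proof.
move=> hx hy; apply/eqP/eqP => [/(f_equal (@nat_of_ord _)) /=|->//].
by rewrite !modn_small.
Qed.

Lemma inZp0 : (0%R : T) = inZp 0.
Proof. by apply: val_inj; rewrite /= mod0n. Qed.

Lemma inZpD (x y : nat) : (inZp (x + y) : T) = (inZp x + inZp y)%R.
Proof. by apply: val_inj; rewrite /= modnDm. Qed.

Lemma inZpB (x y : nat) : (y <= x)%N -> ((inZp x : T) - inZp y)%R = inZp (x - y).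
Proof. by move=> h; apply/eqP; rewrite subr_eq -inZpD subnK. Qed.

Lemma inZpN (x : nat) : (0 < x < v)%N -> (- (inZp x : T))%R = inZp (v - x).
Proof.
move=> /andP [h1 h2]; apply/eqP; rewrite eq_sym -subr_eq0 opprK -inZpD subnK ?(ltnW h2) //.
by rewrite inZp0; apply/eqP; apply: val_inj; rewrite /= modnn mod0n.
Qed.

Lemma memd3 (w x y z d : T) : x != y -> x != z -> y != z ->
  nat_of_bool ((w + d)%R \in [set x; y; z]) = ((x - w)%R == d) + ((y - w)%R == d) + ((z - w)%R == d).
Proof.
move=> hxy hxz hyz.
have Eq u : ((w + d)%R == u) = ((u - w)%R == d) by rewrite subr_eq addrC eq_sym.
rewrite !inE !Eq.
have [e1|e1] := eqVneq (x - w)%R d; have [e2|e2] := eqVneq (y - w)%R d;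
  have [e3|e3] := eqVneq (z - w)%R d;
  rewrite ?e1 ?e2 ?e3 ?eqxx ?(negbTE e1) ?(negbTE e2) ?(negbTE e3) //=; exfalso;
 first [ move/eqP: hxy; apply; apply: (addIr (- w)%R); by rewrite e1 e2
       | move/eqP: hxz; apply; apply: (addIr (- w)%R); by rewrite e1 e3
       | move/eqP: hyz; apply; apply: (addIr (- w)%R); by rewrite e2 e3 ].
Qed.

Lemma chi3 (x y z d : T) : x != y -> x != z -> y != z ->
  chi d d [set x; y; z] =
  nat_of_bool ((y - x)%R == d) + ((z - x)%R == d) + ((x - y)%R == d) + ((z - y)%R == d) + ((x - z)%R == d) + ((y - z)%R == d) + 
  (((x - x)%R == d) + ((y - y)%R == d) + ((z - z)%R == d)).
Proof.
move=> hxy hxz hyz; rewrite /chi.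
rewrite (eq_bigr (fun w => if w \in [set x; y; z] then nat_of_bool ((w + d)%R \in [set x; y; z]) else 0%N)); last first.
  by move=> w _; rewrite -andbA andbb; case: (w \in _).
rewrite -big_mkcond /= (eq_bigl (mem (x |: (y |: [set z])))); last by move=> i; rewrite !inE orbA.
rewrite big_setU1 /=; last by rewrite !inE negb_or hxy hxz.
rewrite big_setU1 /=; last by rewrite !inE hyz.
rewrite big_set1 !memd3 //. lia.
Qed.

End Z.
Section Spec.
Variables (n : nat) (a : nat -> nat).
Hypothesis hn : 0 < n.
Hypothesis hsk : SK n a.
Local Notation v := (6 * n).+1.
Local Notation T := 'I_v.

Definition An j := a j.+1 + n.
Definition Bn j := a j.+1 + j.+1 + n.
Definition ev j s := nth 0 [:: j.+1; An j; Bn j; v - j.+1; v - An j; v - Bn j] s.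

Lemma ev_bound j s : j < n -> s < 6 -> 0 < ev j s < v.
Proof.
move=> hj hs.
have [h1 h2 _ _ _] := hsk (j := j.+1) (k := j.+1) (ltac:(lia)) (ltac:(lia)).
by case: s hs => [|[|[|[|[|[|//]]]]]] _; rewrite /ev /An /Bn /=; lia.
Qed.

Lemma ev_inj j k s t : j < n -> k < n -> s < 6 -> t < 6 -> ev j s = ev k t -> j = k /\ s = t.
Proof.
move=> hj hk hs ht.
have [h1 h2 [h3 h4] h5 [h6 h7 h8]] := hsk (j := j.+1) (k := k.+1) (ltac:(lia)) (ltac:(lia)).
have [g1 g2 [g3 g4] g5 [g6 g7 g8]] := hsk (j := k.+1) (k := j.+1) (ltac:(lia)) (ltac:(lia)).
have [e|hjk] := eqVneq j k.
  subst k; clear h3 h4 g3 g4 g1 g2 g5 g6 g7 g8.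
  case: s hs => [|[|[|[|[|[|//]]]]]] _; case: t ht => [|[|[|[|[|[|//]]]]]] _; rewrite /ev /An /Bn /=; lia.
have e1 : a j.+1 <> a k.+1 by move/h3; lia.
have e2 : a j.+1 + j.+1 <> a k.+1 + k.+1 by move/h4; lia.
clear h3 h4 g3 g4.
case: s hs => [|[|[|[|[|[|//]]]]]] _; case: t ht => [|[|[|[|[|[|//]]]]]] _; rewrite /ev /An /Bn /=; lia.
Qed.

Definition E (x : 'I_n * 'I_6) : T := inZp (ev x.1 x.2).
Definition FB (j : 'I_n) : {set T} := [set 0%R; inZp j.+1; inZp (Bn j)].
Definition MB (j : 'I_n) : {set T} := [set 0%R; inZp (An j); inZp (Bn j)].

Lemma jAB j : j < n -> [/\ 0 < j.+1 < An j, An j < Bn j, Bn j < v, Bn j - j.+1 = An j & Bn j - An j = j.+1].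
Proof.
move=> hj; have [h1 h2 _ _ _] := hsk (j := j.+1) (k := j.+1) (ltac:(lia)) (ltac:(lia)).
rewrite /An /Bn; split; lia.
Qed.

Lemma jAB2 j : j < n -> An j + Bn j < v /\ Bn j + j.+1 < v.
Proof.
move=> hj; have [h1 h2 _ _ [_ h7 _]] := hsk (j := j.+1) (k := j.+1) (ltac:(lia)) (ltac:(lia)).
rewrite /An /Bn; split; lia.
Qed.

Lemma sumE6 (j : 'I_n) d : \sum_(s : 'I_6) nat_of_bool (E (j, s) == d) =
  nat_of_bool (inZp j.+1 == d) + (inZp (An j) == d) + (inZp (Bn j) == d) + (inZp (v - j.+1) == d)
   + (inZp (v - An j) == d) + (inZp (v - Bn j) == d).
Proof. by rewrite !big_ord_recl big_ord0 /E /ev /= addn0 !addnA. Qed.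

Lemma chiF (j : 'I_n) (d : T) : d != 0%R -> chi d d (FB j) = \sum_(s : 'I_6) nat_of_bool (E (j, s) == d).
Proof.
move=> hd; have [/andP [h0 h1] h2 h3 h4 h5] := jAB (ltn_ord j).
rewrite sumE6 chi3; last 3 first.
- by rewrite inZp0 inZp_eq; lia.
- by rewrite inZp0 inZp_eq; lia.
- by rewrite inZp_eq; lia.
rewrite !subrr (eq_sym 0%R d) (negbTE hd) !addn0 !subr0 !sub0r.
rewrite -(opprB (inZp (Bn j)) (inZp j.+1)) (@inZpB _ (Bn j) j.+1); last lia.
rewrite h4 !inZpN; try by (apply/andP; split; lia).
move: (inZp j.+1 == d) (inZp (An j) == d) (inZp (Bn j) == d) (inZp (v - j.+1) == d) (inZp (v - An j) == d) (inZp (v - Bn j) == d).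
by move=> [] [] [] [] [] [].
Qed.

Lemma chiM (j : 'I_n) (d : T) : d != 0%R -> chi d d (MB j) = \sum_(s : 'I_6) nat_of_bool (E (j, s) == d).
Proof.
move=> hd; have [/andP [h0 h1] h2 h3 h4 h5] := jAB (ltn_ord j).
rewrite sumE6 chi3; last 3 first.
- by rewrite inZp0 inZp_eq; lia.
- by rewrite inZp0 inZp_eq; lia.
- by rewrite inZp_eq; lia.
rewrite !subrr (eq_sym 0%R d) (negbTE hd) !addn0 !subr0 !sub0r.
rewrite -(opprB (inZp (Bn j)) (inZp (An j))) (@inZpB _ (Bn j) (An j)); last lia.
rewrite h5 !inZpN; try by (apply/andP; split; lia).
move: (inZp j.+1 == d) (inZp (An j) == d) (inZp (Bn j) == d) (inZp (v - j.+1) == d) (inZp (v - An j) == d) (inZp (v - Bn j) == d).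
by move=> [] [] [] [] [] [].
Qed.


Lemma E_inj : injective E.
Proof.
move=> [j s] [k t] /eqP; rewrite /E /= inZp_eq; last 2 first.
- by case/andP: (ev_bound (ltn_ord j) (ltn_ord s)).
- by case/andP: (ev_bound (ltn_ord k) (ltn_ord t)).
move=> /eqP /(ev_inj (ltn_ord j) (ltn_ord k) (ltn_ord s) (ltn_ord t)) [h1 h2].
by congr pair; apply: val_inj.
Qed.

Lemma E_sum (d : T) : d != 0%R -> \sum_(x : 'I_n * 'I_6) nat_of_bool (E x == d) = 1.
Proof.
move=> hd.
have sub : [set E x | x in setT] \subset [set~ 0%R].
  apply/subsetP => _ /imsetP [[j s] _ ->]; rewrite !inE /E inZp0 inZp_eq //=.
    by case/andP: (ev_bound (ltn_ord j) (ltn_ord s)) => h _; apply/eqP => e; rewrite e in h.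
  by case/andP: (ev_bound (ltn_ord j) (ltn_ord s)).
have eqS : [set E x | x in setT] = [set~ 0%R].
  apply/eqP; rewrite eqEcard sub /= cardsC1 card_imset; last exact: E_inj.
  by rewrite cardsT card_prod !card_ord /= mulnC.
have : d \in [set E x | x in setT] by rewrite eqS !inE.
case/imsetP => x0 _ ->.
rewrite (eq_bigr (fun x => nat_of_bool (x == x0))); last by move=> x _; rewrite (inj_eq E_inj).
by rewrite (bigD1 x0) //= eqxx big1 // => y /negbTE ->.
Qed.

Definition bl (x : 'I_n * bool) : {set T} := if x.2 then MB x.1 else FB x.1.

Lemma chi_bl x (d : T) : d != 0%R -> chi d d (bl x) = \sum_(s : 'I_6) nat_of_bool (E (x.1, s) == d).
Proof. by case: x => j [] hd /=; rewrite /bl /= ?chiM ?chiF. Qed.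

Lemma sum_c (d : T) : d != 0%R ->
  \sum_(j : 'I_n) \sum_(s : 'I_6) nat_of_bool (E (j, s) == d) = 1.
Proof. by move=> hd; rewrite pair_bigA /=; etransitivity; last exact: (E_sum hd); apply: eq_bigr => -[]. Qed.

Lemma bl_card x : #|bl x| = 3.
Proof.
have [/andP [h0 h1] h2 h3 h4 h5] := jAB (ltn_ord x.1).
case: x h0 h1 h2 h3 h4 h5 => j [] /= h0 h1 h2 h3 h4 h5; rewrite /bl /= /MB /FB.
- rewrite -setUA cardsU1 cards2 !inE inZp0 !inZp_eq; lia.
- rewrite -setUA cardsU1 cards2 !inE inZp0 !inZp_eq; lia.
Qed.


Lemma c_pos (j : 'I_n) : 0 < \sum_(s : 'I_6) nat_of_bool (E (j, s) == inZp j.+1).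
Proof. by rewrite big_ord_recl /E /ev /= eqxx. Qed.

Lemma dj_neq0 (j : 'I_n) : (inZp j.+1 : T) != 0%R.
Proof.
have [/andP [h0 h1] h2 h3 h4 h5] := jAB (ltn_ord j).
rewrite inZp0 inZp_eq; lia.
Qed.

Lemma chiFpos (j : 'I_n) : 0 < chi (inZp j.+1) (inZp (Bn j)) (FB j).
Proof.
rewrite /chi (bigD1 0%R) //= !add0r /FB !inE !eqxx /=.
by rewrite !orbT.
Qed.

Lemma chiM0 (j : 'I_n) : chi (inZp j.+1) (inZp (Bn j)) (MB j) = 0.
Proof.
have [/andP [h0 h1] h2 h3 h4 h5] := jAB (ltn_ord j).
have [h6 h7] := jAB2 (ltn_ord j).
rewrite /chi big1 // => z _; apply/eqP; rewrite eqb0.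
apply/negP => /andP [/andP [hz e1] e2]; move: hz e1 e2; rewrite /MB !inE.
case/orP => [/orP []|] /eqP ->;
 first [ move=> ee _; move: ee; rewrite ?add0r -?inZpD inZp0 !inZp_eq; lia
       | move=> _ ee; move: ee; rewrite ?add0r -?inZpD inZp0 !inZp_eq; lia ].
Qed.

Lemma bl_orb x y t : tr (bl x) t = bl y -> x = y.
Proof.
move=> e.
have ec al be : chi al be (bl x) = chi al be (bl y) by rewrite -e chi_tr.
case: x y e ec => j b [k c] e ec.
have [hjk|hjk] := eqVneq j k.
  subst k; congr pair.
  have := ec (inZp j.+1) (inZp (Bn j)); rewrite /bl /=; clear ec e.
  have := chiFpos j; have := chiM0 j.
  by case: b c => [] [] //= h0 h1 h2; lia.
exfalso.
have := ec (inZp j.+1) (inZp j.+1); rewrite !chi_bl ?dj_neq0 //= => h.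
have := sum_c (dj_neq0 j); rewrite (bigD1 j) //= (bigD1 k) /=; last by rewrite eq_sym.
have := c_pos j; rewrite h => hk hj.
have := c_pos j. lia.
Qed.

End Spec.



Lemma sum_ge n i : \sum_(j < n) nat_of_bool (i <= j) = n - i.
Proof.
elim: n => [|n IH]; first by rewrite big_ord0.
by rewrite big_ord_recr /= IH; case: leqP => h; lia.
Qed.

Lemma sum_lt n i : \sum_(j < n) nat_of_bool (j < i) = minn i n.
Proof.
elim: n => [|n IH]; first by rewrite big_ord0; lia.
by rewrite big_ord_recr /= IH; case: ltnP => h; lia.
Qed.

Definition mu (i : nat) n (x : 'I_n * bool) : nat :=
  if x.2 then (if x.1 < i then 0 else 1) else (if x.1 < i then 2 else 1).

Lemma card_mu n i c : #|[set x : 'I_n * bool | mu i x == c]| =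
  \sum_(j < n) (nat_of_bool (mu i (j, true) == c) + nat_of_bool (mu i (j, false) == c)).
Proof.
rewrite -sum1_card big_mkcond /=.
transitivity (\sum_(j < n) \sum_(b : bool) (if (j, b) \in [set x : 'I_n * bool | mu i x == c] then 1 else 0)).
  by rewrite pair_bigA; apply: eq_bigr => -[].
by apply: eq_bigr => j _; rewrite big_bool !inE; case: (_ == c); case: (_ == c).
Qed.

Lemma count1 n i : #|[set x : 'I_n * bool | mu i x == 1]| = 2 * (n - i).
Proof.
rewrite card_mu (eq_bigr (fun j : 'I_n => 2 * nat_of_bool (i <= j))) => [|j _].
  by rewrite -big_distrr sum_ge.
by rewrite /mu /=; case: ltnP.
Qed.

Lemma count2 n i : i <= n -> #|[set x : 'I_n * bool | mu i x == 2]| = i.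
Proof.
move=> hi; rewrite card_mu (eq_bigr (fun j : 'I_n => nat_of_bool (j < i))) => [|j _].
  by rewrite sum_lt; lia.
by rewrite /mu /=; case: ltnP.
Qed.

Theorem mainTheorem3 (n i : nat) (hn : 1 <= n) (hi : i <= n) :
  exists m : {set 'I_(6 * n + 1)} -> nat,
    [/\ is_CTS 2 m, fine m 1 = 2 * n - 2 * i & fine m 2 = i].
Proof.
have [a ha] := skolem hn.
rewrite addn1.
have v1 : 1 < (6 * n).+1 by lia.
have co : coprime 3 (6 * n).+1.
  by rewrite /coprime (_ : (6 * n).+1 = 2 * n * 3 + 1) ?gcdnMDl //; lia.
exists (Mf (bl a) (mu i (n:=n))); split.
- apply: gen_CTS => //.
  + exact: (bl_card hn ha).
  move=> d hd.
  transitivity (\sum_(j : 'I_n) \sum_(b : bool) (mu i (j, b) * chi d d (bl a (j, b)))).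
    by rewrite pair_bigA; apply: eq_bigr => -[].
  rewrite (eq_bigr (fun j => 2 * \sum_(s : 'I_6) nat_of_bool (E a (j, s) == d))); last first.
    move=> j _; rewrite big_bool /= !(chi_bl hn ha) //= /mu /=; case: (j < i); lia.
  by rewrite -big_distrr /= (sum_c hn ha).
- rewrite fine_eq //; [|exact: (bl_card hn ha)|exact: (bl_orb hn ha)].
  by rewrite count1; lia.
- rewrite fine_eq //; [|exact: (bl_card hn ha)|exact: (bl_orb hn ha)].
  by rewrite count2.
Qed.
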